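(* Let $H$ be a subgroup of Thompson's group $F$ such that: (1) for every $r\in\mathbb{N}$, $1^r0\sim_H 10$; (2) for every $s\in\mathbb{N}$, $0^s1\sim_H 01$; (3) $01\sim_H 10\sim_H 010\sim_H 011$. Then $\mathrm{Cl}(H)$ contains the derived subgroup $[F,F]$.
   Context: Thompson's group $F$ is the group of all piecewise linear homeomorphisms of $[0,1]$ with finitely many breakpoints, all breakpoints dyadic fractions and all slopes integer powers of $2$. For a finite binary word $u$, let $[u]$ denote the dyadic interval of numbers whose binary expansion begins with $u$. An element $h\in F$ has the pair of branches $u\rightarrow v$ if $h(.u\alpha)=.v\alpha$ for every infinite binary word $\alpha$ (i.e. $h$ maps $[u]$ linearly onto $[v]$). For $H\le F$ and finite binary words $u,v$, write $u\sim_H v$ if some $h\in H$ has the pair of branches $u\rightarrow v$ (an equivalence relation). The closure $\mathrm{Cl}(H)$ is the subgroup of all $f\in F$ for which there is a finite subdivision of $[0,1]$ into intervals such that on each interval $f$ coincides with some element of $H$. Words like $1^r0$ denote $r$ copies of $1$ followed by $0$. *)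

(* Defs.v *)
From Stdlib Require Import Reals List ZArith.
Import ListNotations.
Open Scope R_scope.

Definition dyadic (x : R) : Prop :=
  exists (m : Z) (n : nat), x = IZR m / 2 ^ n.

(* Elements of Thompson's group F, viewed as maps R -> R that are the
   identity outside [0,1] (convention; only the restriction to [0,1] matters).
   On [0,1]: a subdivision 0 = p 0 < ... < p n = 1 by dyadic points, affine
   with slope a power of 2 on each closed piece (hence continuous and
   increasing), fixing 0 and 1 (hence a homeomorphism of [0,1]). *)
Definition inF (f : R -> R) : Prop :=
  (forall x, (x < 0 \/ 1 < x) -> f x = x) /\
  f 0 = 0 /\ f 1 = 1 /\
  exists (n : nat) (p : nat -> R),
    p 0%nat = 0 /\ p n = 1 /\
    (forall i, (i < n)%nat -> p i < p (S i)) /\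
    (forall i, (i <= n)%nat -> dyadic (p i)) /\
    (forall i, (i < n)%nat ->
       exists (k : Z) (b : R),
         forall x, p i <= x <= p (S i) -> f x = powerRZ 2 k * x + b).

Fixpoint wval (u : list bool) : R :=
  match u with
  | [] => 0
  | b :: u' => ((if b then 1 else 0) + wval u') / 2
  end.

(* h has the pair of branches u -> v: h maps [u] = [.u, .u + 2^-|u|]
   linearly (increasingly) onto [v], i.e. h(.u alpha) = .v alpha. *)
Definition branch (h : R -> R) (u v : list bool) : Prop :=
  forall x, wval u <= x <= wval u + / 2 ^ length u ->
    h x = wval v + (x - wval u) * 2 ^ length u / 2 ^ length v.

Definition subgroupF (H : (R -> R) -> Prop) : Prop :=
  (forall h, H h -> inF h) /\
  H (fun x => x) /\
  (forall g h, H g -> H h -> H (fun x => g (h x))) /\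
  (forall h, H h -> exists g, H g /\ forall x, g (h x) = x /\ h (g x) = x).

Definition simH (H : (R -> R) -> Prop) (u v : list bool) : Prop :=
  exists h, H h /\ branch h u v.

Definition inCl (H : (R -> R) -> Prop) (f : R -> R) : Prop :=
  inF f /\
  exists (n : nat) (p : nat -> R),
    p 0%nat = 0 /\ p n = 1 /\
    (forall i, (i < n)%nat -> p i < p (S i)) /\
    (forall i, (i < n)%nat ->
       exists h, H h /\ forall x, p i <= x <= p (S i) -> f x = h x).

Definition inverse_of (g f : R -> R) : Prop :=
  forall x, g (f x) = x /\ f (g x) = x.

Definition commF (c : R -> R) : Prop :=
  exists f g fi gi, inF f /\ inF g /\ inverse_of fi f /\ inverse_of gi g /\
    forall x, c x = f (g (fi (gi x))).

Inductive derivedF : (R -> R) -> Prop :=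
  | dF_id : derivedF (fun x => x)
  | dF_comm : forall c, commF c -> derivedF c
  | dF_mul : forall f g, derivedF f -> derivedF g -> derivedF (fun x => f (g x))
  | dF_inv : forall f g, derivedF f -> inverse_of g f -> derivedF g.

(* Main.v *)
Require Import Defs.
From Stdlib Require Import Reals List Lra Lia ZArith FunctionalExtensionality.
Import ListNotations.
Open Scope R_scope.


Lemma pow2_pos n : 0 < 2 ^ n.
Proof. apply pow_lt; lra. Qed.
Lemma pow2_nz n : 2 ^ n <> 0.
Proof. generalize (pow2_pos n); lra. Qed.
Lemma pow2_inv_pos n : 0 < / 2 ^ n.
Proof. apply Rinv_0_lt_compat, pow2_pos. Qed.

Lemma wval_bounds u : 0 <= wval u /\ wval u + / 2 ^ length u <= 1.
Proof.
  induction u as [|b u IH]; simpl.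
  - rewrite Rinv_1; lra.
  - rewrite Rinv_mult. destruct b; lra.
Qed.

Lemma wval_app u w : wval (u ++ w) = wval u + wval w / 2 ^ length u.
Proof.
  induction u as [|b u IH]; simpl.
  - field.
  - rewrite IH. field. apply pow2_nz.
Qed.

Lemma scaled t A B : 0 < A -> 0 < B -> 0 <= t <= / A -> 0 <= t * A / B <= / B.
Proof.
  intros HA HB [H1 H2]. unfold Rdiv. split.
  - apply Rmult_le_pos; [apply Rmult_le_pos; lra| left; apply Rinv_0_lt_compat; lra].
  - assert (t * A <= 1).
    { replace 1 with (/A * A) by (field; lra). apply Rmult_le_compat_r; lra. }
    assert (0 < / B) by (apply Rinv_0_lt_compat; lra).
    replace (/ B) with (1 * / B) at 2 by ring.
    apply Rmult_le_compat_r; lra.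
Qed.

Lemma branch_ext h u v w : branch h u v -> branch h (u ++ w) (v ++ w).
Proof.
  intros Hb x Hx. rewrite !wval_app, !length_app, !pow_add in *.
  destruct (wval_bounds w) as [W1 W2].
  assert (HA := pow2_pos (length u)). assert (HV := pow2_pos (length v)).
  assert (HW := pow2_pos (length w)).
  rewrite Hb.
  - field. repeat split; apply pow2_nz.
  - assert ((wval w + / 2 ^ length w) * / 2 ^ length u <= / 2 ^ length u).
    { replace (/ 2 ^ length u) with (1 * / 2 ^ length u) at 2 by ring.
      apply Rmult_le_compat_r; [left; apply pow2_inv_pos| lra]. }
    assert (0 <= wval w * / 2 ^ length u) by (apply Rmult_le_pos; [lra| left; apply pow2_inv_pos]).
    rewrite Rinv_mult in Hx. unfold Rdiv in Hx. split; nra.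
Qed.

Lemma branch_comp g h u v w : branch h u v -> branch g v w -> branch (fun x => g (h x)) u w.
Proof.
  intros Hh Hg x Hx. rewrite (Hh x Hx). rewrite Hg.
  - field. split; apply pow2_nz.
  - pose proof (scaled (x - wval u) (2 ^ length u) (2 ^ length v) (pow2_pos _) (pow2_pos _)).
    lra.
Qed.

Lemma branch_inv f g u v : branch f u v -> inverse_of g f -> branch g v u.
Proof.
  intros Hf Hg y Hy.
  pose proof (scaled (y - wval v) (2 ^ length v) (2 ^ length u) (pow2_pos _) (pow2_pos _)).
  set (x := wval u + (y - wval v) * 2 ^ length v / 2 ^ length u).
  assert (Hfx : f x = y).
  { unfold x. rewrite Hf by lra. field. split; apply pow2_nz. }
  rewrite <- Hfx. destruct (Hg x) as [-> _]. reflexivity.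
Qed.



Lemma branch_id u : branch (fun x => x) u u.
Proof. intros x _. field. apply pow2_nz. Qed.

Lemma simH_refl (H : (R -> R) -> Prop) (HG : subgroupF H) u : simH H u u.
Proof. exists (fun x => x). split; [apply HG | apply branch_id]. Qed.

Lemma simH_sym (H : (R -> R) -> Prop) (HG : subgroupF H) u v : simH H u v -> simH H v u.
Proof.
  intros [h [Hh Hb]]. destruct HG as [_ [_ [_ Hinv]]].
  destruct (Hinv h Hh) as [g [Hg Hgi]].
  exists g. split; auto. apply (branch_inv h); auto.
Qed.

Lemma simH_trans (H : (R -> R) -> Prop) (HG : subgroupF H) u v w : simH H u v -> simH H v w -> simH H u w.
Proof.
  intros [h [Hh Hb]] [g [Hg Hb']]. exists (fun x => g (h x)). split.
  - apply HG; auto.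
  - eapply branch_comp; eauto.
Qed.

Lemma simH_ext (H : (R -> R) -> Prop) u v w : simH H u v -> simH H (u ++ w) (v ++ w).
Proof. intros [h [Hh Hb]]. exists h. split; auto. apply branch_ext; auto. Qed.


Lemma decomp u : In true u -> In false u ->
  exists b r w, (1 <= r)%nat /\ u = repeat b r ++ negb b :: w.
Proof.
  induction u as [|c u IH]; intros Ht Hf; [destruct Ht|].
  destruct (in_dec Bool.bool_dec true u) as [Ht'|Ht'];
  destruct (in_dec Bool.bool_dec false u) as [Hf'|Hf'].
  - destruct (IH Ht' Hf') as [b [r [w [Hr Hu]]]].
    destruct (Bool.bool_dec b c) as [<-|Hbc].
    + exists b, (S r), w. split; [lia|]. rewrite Hu. reflexivity.
    + exists c, 1%nat, (repeat b (pred r) ++ negb b :: w). split; [lia|].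
      rewrite Hu. destruct r; [lia|]. destruct b, c; simpl; congruence.
  - destruct u as [|d u]; [destruct Ht'|].
    exists c, 1%nat, u. split; [lia|]. simpl.
    destruct c, d; simpl in *; intuition congruence.
  - destruct u as [|d u]; [destruct Hf'|].
    exists c, 1%nat, u. split; [lia|]. simpl.
    destruct c, d; simpl in *; intuition congruence.
  - exfalso. destruct c; simpl in *; intuition congruence.
Qed.


Lemma key (H : (R -> R) -> Prop) :
  subgroupF H ->
  (forall r : nat, (1 <= r)%nat -> simH H (repeat true r ++ [false]) [true; false]) ->
  (forall s : nat, (1 <= s)%nat -> simH H (repeat false s ++ [true]) [false; true]) ->
  simH H [false; true] [true; false] ->
  simH H [true; false] [false; true; false] ->
  simH H [false; true; false] [false; true; true] ->
  forall u, In true u -> In false u -> simH H u [false; true].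
Proof.
  intros HG H1 H2 H3 H4 H5.
  assert (A : forall w, simH H ([false; true] ++ w) [false; true]).
  { induction w as [|b w IH].
    - apply simH_refl; auto.
    - eapply simH_trans; [auto| |exact IH].
      replace ([false; true] ++ b :: w) with ([false; true; b] ++ w) by reflexivity.
      apply simH_ext; auto. destruct b.
      + apply simH_sym; auto. eapply simH_trans; eauto. eapply simH_trans; eauto.
      + apply simH_sym; auto. eapply simH_trans; eauto. }
  intros u Ht Hf. destruct (decomp u Ht Hf) as [b [r [w [Hr ->]]]].
  destruct b; simpl negb.
  - eapply simH_trans; [auto| |apply (A w)].
    replace (repeat true r ++ false :: w) with ((repeat true r ++ [false]) ++ w)
      by (rewrite <- app_assoc; reflexivity).
    eapply simH_trans; [auto| apply simH_ext, H1, Hr |].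
    apply (simH_ext H [true;false] [false;true] w). apply simH_sym; auto.
  - eapply simH_trans; [auto| |apply (A w)].
    replace (repeat false r ++ true :: w) with ((repeat false r ++ [true]) ++ w)
      by (rewrite <- app_assoc; reflexivity).
    apply simH_ext; auto.
Qed.


Definition Nice (f : R -> R) : Prop :=
  (forall x, (x < 0 \/ 1 < x) -> f x = x) /\ f 0 = 0 /\ f 1 = 1 /\
  (exists g, inverse_of g f) /\
  exists N K, forall u, length u = N -> exists v, (length v <= K)%nat /\ branch f u v.

Lemma cover N : forall z, 0 <= z <= 1 ->
  exists u, length u = N /\ wval u <= z <= wval u + / 2 ^ N.
Proof.
  induction N as [|N IH]; intros z Hz.
  - exists []. simpl. rewrite Rinv_1. split; [reflexivity|lra].
  - destruct (Rle_lt_dec z (/2)) as [Hl|Hl].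
    + destruct (IH (2 * z)) as [u [Hu Hz']]; [lra|].
      exists (false :: u). simpl. rewrite Hu, Rinv_mult. split; [reflexivity|lra].
    + destruct (IH (2 * z - 1)) as [u [Hu Hz']]; [lra|].
      exists (true :: u). simpl. rewrite Hu, Rinv_mult. split; [reflexivity|lra].
Qed.

Lemma prefix v : forall y, (length v <= length y)%nat ->
  wval v <= wval y + / 2 ^ S (length y) ->
  wval y + / 2 ^ S (length y) <= wval v + / 2 ^ length v ->
  exists w, y = v ++ w.
Proof.
  induction v as [|b v IH]; intros y Hl H1 H2.
  - exists y. reflexivity.
  - destruct y as [|c y]; simpl in Hl; [lia|].
    simpl in H1, H2. repeat rewrite Rinv_mult in H1. repeat rewrite Rinv_mult in H2.
    destruct (wval_bounds v) as [V1 V2]. destruct (wval_bounds y) as [Y1 Y2].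
    pose proof (pow2_inv_pos (length y)).
    assert (b = c).
    { destruct b, c; auto; exfalso; lra. }
    subst c. destruct (IH y) as [w Hw]; [lia| simpl; rewrite Rinv_mult; destruct b; lra
      | simpl; rewrite Rinv_mult; destruct b; lra |].
    exists w. rewrite Hw. reflexivity.
Qed.

Lemma range01 f g : (forall x, (x < 0 \/ 1 < x) -> f x = x) -> inverse_of g f ->
  forall x, 0 <= x <= 1 -> 0 <= f x <= 1.
Proof.
  intros Hout Hg x Hx.
  destruct (Rlt_le_dec (f x) 0) as [Hl|Hl].
  - exfalso. assert (E : f (f x) = f x) by (apply Hout; auto).
    destruct (Hg (f x)) as [E1 _]. rewrite E in E1. destruct (Hg x) as [E2 _]. lra.
  - destruct (Rlt_le_dec 1 (f x)) as [Hl'|Hl']; [|lra].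
    exfalso. assert (E : f (f x) = f x) by (apply Hout; auto).
    destruct (Hg (f x)) as [E1 _]. rewrite E in E1. destruct (Hg x) as [E2 _]. lra.
Qed.

Lemma split_word (u : list bool) n : (n <= length u)%nat ->
  exists u1 w, u = u1 ++ w /\ length u1 = n /\ length w = (length u - n)%nat.
Proof.
  intros Hn. exists (firstn n u), (skipn n u). split; [symmetry; apply firstn_skipn|].
  rewrite length_firstn, length_skipn. split; lia.
Qed.

Lemma Nice_id : Nice (fun x => x).
Proof.
  repeat split; auto.
  - exists (fun x => x). intro; auto.
  - exists 0%nat, 0%nat. intros u Hu. exists u. split; [lia|].
    intros x _. field. apply pow2_nz.
Qed.

Lemma Nice_comp g h : Nice g -> Nice h -> Nice (fun x => g (h x)).
Proof.
  intros [Og [g0 [g1 [[gi Hgi] [Ng [Kg Bg]]]]]] [Oh [h0 [h1 [[hi Hhi] [Nh [Kh Bh]]]]]].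
  split; [intros x Hx; rewrite Oh, Og; auto|].
  split; [rewrite h0, g0; auto|]. split; [rewrite h1, g1; auto|].
  split.
  - exists (fun x => hi (gi x)). intro x. split.
    + destruct (Hgi (h x)) as [-> _]. apply Hhi.
    + destruct (Hhi (gi x)) as [_ ->]. apply Hgi.
  - exists (Nh + Ng)%nat, (Kg + Kh)%nat. intros u Hu.
    destruct (split_word u Nh) as [u1 [w [-> [L1 Lw]]]]; [lia|].
    destruct (Bh u1 L1) as [v1 [Lv1 B1]].
    destruct (split_word (v1 ++ w) Ng) as [v2 [w' [E [L2 Lw']]]];
      [rewrite length_app; lia|].
    destruct (Bg v2 L2) as [v3 [Lv3 B3]].
    exists (v3 ++ w'). split.
    + rewrite length_app, Lw', length_app. lia.
    + eapply branch_comp; [apply branch_ext; exact B1|]. rewrite E.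
      apply branch_ext; auto.
Qed.

Lemma Nice_inv f g : Nice f -> inverse_of g f -> Nice g.
Proof.
  intros [Of [f0 [f1 [_ [N [K Bf]]]]]] Hg.
  assert (Og : forall x, (x < 0 \/ 1 < x) -> g x = x).
  { intros x Hx. rewrite <- (Of x Hx) at 1. apply Hg. }
  split; [exact Og|].
  split; [destruct (Hg 0) as [E _]; rewrite f0 in E; exact E|].
  split; [destruct (Hg 1) as [E _]; rewrite f1 in E; exact E|].
  assert (Hf : inverse_of f g) by (intro x; split; apply Hg).
  split; [exists f; exact Hf|].
  exists K, (N + K)%nat. intros y Hy.
  set (x := wval y + / 2 ^ S (length y)).
  destruct (wval_bounds y) as [Y1 Y2].
  assert (Hx : 0 <= x <= 1).
  { unfold x. simpl. rewrite Rinv_mult. pose proof (pow2_inv_pos (length y)). lra. }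
  pose proof (range01 g f Og Hf x Hx) as Hz.
  destruct (cover N (g x) Hz) as [u [Lu Hu]].
  destruct (Bf u Lu) as [v [Lv Bv]].
  assert (Efx : f (g x) = x) by apply Hg.
  pose proof (Bv (g x) ltac:(rewrite Lu; exact Hu)) as Ev.
  rewrite Efx in Ev.
  pose proof (scaled (g x - wval u) (2 ^ length u) (2 ^ length v) (pow2_pos _) (pow2_pos _)).
  destruct (prefix v y) as [w Hw]; [lia| | |].
  - fold x. rewrite Lu in H, Ev. specialize (H ltac:(lra)). lra.
  - fold x. rewrite Lu in H, Ev. specialize (H ltac:(lra)). lra.
  - exists (u ++ w). split.
    + rewrite length_app. assert (length y = length v + length w)%nat
        by (rewrite Hw, length_app; auto). lia.
    + rewrite Hw. apply (branch_inv f); auto. apply branch_ext; auto.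
Qed.


Definition germ0 (f : R -> R) (k : Z) : Prop :=
  exists e, 0 < e /\ forall x, 0 <= x <= e -> f x = powerRZ 2 k * x.
Definition germ1 (f : R -> R) (k : Z) : Prop :=
  exists e, 0 < e /\ forall x, 1 - e <= x <= 1 -> f x = 1 - powerRZ 2 k * (1 - x).

Lemma p2pos k : 0 < powerRZ 2 k.
Proof. apply powerRZ_lt; lra. Qed.

Lemma germ0_comp g h k j : germ0 g k -> germ0 h j -> germ0 (fun x => g (h x)) (k + j).
Proof.
  intros [eg [Eg Hg]] [eh [Eh Hh]].
  pose proof (p2pos j) as Pj. pose proof (p2pos k) as Pk.
  exists (Rmin eh (eg / powerRZ 2 j)). split.
  - apply Rmin_glb_lt; auto. apply Rdiv_lt_0_compat; auto.
  - intros x Hx. assert (Hx1 := Rmin_l eh (eg / powerRZ 2 j)).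
    assert (Hx2 := Rmin_r eh (eg / powerRZ 2 j)).
    rewrite Hh by lra. rewrite Hg.
    + rewrite powerRZ_add by lra. ring.
    + split; [apply Rmult_le_pos; lra|].
      assert (x <= eg / powerRZ 2 j) by lra.
      apply (Rmult_le_compat_l (powerRZ 2 j)) in H; [|lra].
      replace (powerRZ 2 j * (eg / powerRZ 2 j)) with eg in H by (field; lra). lra.
Qed.

Lemma germ1_comp g h k j : germ1 g k -> germ1 h j -> germ1 (fun x => g (h x)) (k + j).
Proof.
  intros [eg [Eg Hg]] [eh [Eh Hh]].
  pose proof (p2pos j) as Pj. pose proof (p2pos k) as Pk.
  exists (Rmin eh (eg / powerRZ 2 j)). split.
  - apply Rmin_glb_lt; auto. apply Rdiv_lt_0_compat; auto.
  - intros x Hx. assert (Hx1 := Rmin_l eh (eg / powerRZ 2 j)).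
    assert (Hx2 := Rmin_r eh (eg / powerRZ 2 j)).
    rewrite Hh by lra. rewrite Hg.
    + rewrite powerRZ_add by lra. ring.
    + assert (0 <= 1 - x) by lra.
      assert (1 - x <= eg / powerRZ 2 j) by lra.
      apply (Rmult_le_compat_l (powerRZ 2 j)) in H0; [|lra].
      replace (powerRZ 2 j * (eg / powerRZ 2 j)) with eg in H0 by (field; lra).
      assert (0 <= powerRZ 2 j * (1 - x)) by (apply Rmult_le_pos; lra). lra.
Qed.

Lemma germ0_inv f g k : germ0 f k -> inverse_of g f -> germ0 g (- k).
Proof.
  intros [e [E Hf]] Hg. pose proof (p2pos k) as Pk.
  exists (powerRZ 2 k * e). split; [apply Rmult_lt_0_compat; lra|].
  intros y Hy. set (x := powerRZ 2 (- k) * y).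
  assert (Ex : powerRZ 2 (-k) = / powerRZ 2 k) by apply powerRZ_neg'.
  assert (Hx : 0 <= x <= e).
  { unfold x. rewrite Ex. split.
    - apply Rmult_le_pos; [left; apply Rinv_0_lt_compat; lra| lra].
    - apply (Rmult_le_reg_l (powerRZ 2 k)); [lra|].
      replace (powerRZ 2 k * (/ powerRZ 2 k * y)) with y by (field; lra). lra. }
  assert (Hfx : f x = y). { rewrite Hf by auto. unfold x. rewrite Ex. field. lra. }
  rewrite <- Hfx. destruct (Hg x) as [-> _]. reflexivity.
Qed.

Lemma germ1_inv f g k : germ1 f k -> inverse_of g f -> germ1 g (- k).
Proof.
  intros [e [E Hf]] Hg. pose proof (p2pos k) as Pk.
  exists (powerRZ 2 k * e). split; [apply Rmult_lt_0_compat; lra|].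
  intros y Hy. set (x := 1 - powerRZ 2 (- k) * (1 - y)).
  assert (Ex : powerRZ 2 (-k) = / powerRZ 2 k) by apply powerRZ_neg'.
  assert (Hx : 1 - e <= x <= 1).
  { unfold x. rewrite Ex.
    assert (0 <= / powerRZ 2 k * (1 - y)) by
      (apply Rmult_le_pos; [left; apply Rinv_0_lt_compat; lra| lra]).
    assert (/ powerRZ 2 k * (1 - y) <= e).
    { apply (Rmult_le_reg_l (powerRZ 2 k)); [lra|].
      replace (powerRZ 2 k * (/ powerRZ 2 k * (1 - y))) with (1 - y) by (field; lra). lra. }
    lra. }
  assert (Hfx : f x = y). { rewrite Hf by auto. unfold x. rewrite Ex. field. lra. }
  rewrite <- Hfx. destruct (Hg x) as [-> _]. reflexivity.
Qed.

Lemma germ0_eq f k k' : germ0 f k -> k = k' -> germ0 f k'.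
Proof. intros; subst; auto. Qed.
Lemma germ1_eq f k k' : germ1 f k -> k = k' -> germ1 f k'.
Proof. intros; subst; auto. Qed.


Lemma inF_germ0 f : inF f -> exists k, germ0 f k.
Proof.
  intros [Hout [f0 [f1 [n [p [p0 [pn [Hinc [Hdy Hpc]]]]]]]]].
  destruct n as [|n]; [rewrite p0 in pn; lra|].
  destruct (Hpc 0%nat ltac:(lia)) as [k [b Hk]].
  exists k, (p 1%nat). pose proof (Hinc 0%nat ltac:(lia)). split; [lra|].
  intros x Hx. rewrite Hk by lra.
  assert (b = 0). { pose proof (Hk 0 ltac:(lra)). rewrite f0 in H0. lra. }
  subst; ring.
Qed.

Lemma inF_germ1 f : inF f -> exists k, germ1 f k.
Proof.
  intros [Hout [f0 [f1 [n [p [p0 [pn [Hinc [Hdy Hpc]]]]]]]]].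
  destruct n as [|n]; [rewrite p0 in pn; lra|].
  destruct (Hpc n ltac:(lia)) as [k [b Hk]].
  exists k, (1 - p n). pose proof (Hinc n ltac:(lia)). split; [lra|].
  intros x Hx. rewrite Hk by lra.
  assert (b = 1 - powerRZ 2 k). { pose proof (Hk 1 ltac:(lra)). rewrite f1 in H0. lra. }
  subst; ring.
Qed.


Definition dyD (D : nat) (x : R) := exists m : Z, x = IZR m / 2 ^ D.

Lemma pow2_IZR j : 2 ^ j = IZR (2 ^ Z.of_nat j).
Proof. rewrite <- pow_IZR. reflexivity. Qed.

Lemma dyD_mono D D' x : dyD D x -> (D <= D')%nat -> dyD D' x.
Proof.
  intros [m ->] HD. exists (m * 2 ^ Z.of_nat (D' - D))%Z.
  replace D' with (D + (D' - D))%nat at 2 by lia.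
  rewrite mult_IZR, <- pow2_IZR, pow_add. field. split; apply pow2_nz.
Qed.

Lemma dyadic_D x : dyadic x -> exists D, dyD D x.
Proof. intros [m [n E]]. exists n, m. exact E. Qed.

Lemma dyD_add D x y : dyD D x -> dyD D y -> dyD D (x + y).
Proof. intros [a ->] [b ->]. exists (a + b)%Z. rewrite plus_IZR. field. apply pow2_nz. Qed.

Lemma dyD_opp D x : dyD D x -> dyD D (- x).
Proof. intros [a ->]. exists (- a)%Z. rewrite opp_IZR. field. apply pow2_nz. Qed.

Lemma dy_add x y : dyadic x -> dyadic y -> dyadic (x + y).
Proof.
  intros Hx Hy. destruct (dyadic_D x Hx) as [D1 H1]. destruct (dyadic_D y Hy) as [D2 H2].
  destruct (dyD_add (D1 + D2) x y) as [m E].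
  - apply (dyD_mono D1); auto; lia.
  - apply (dyD_mono D2); auto; lia.
  - exists m, (D1 + D2)%nat. exact E.
Qed.

Lemma dy_opp x : dyadic x -> dyadic (- x).
Proof.
  intros Hx. destruct (dyadic_D x Hx) as [D H1]. destruct (dyD_opp D x H1) as [m E].
  exists m, D. exact E.
Qed.

Lemma dy_pmul k x : dyadic x -> dyadic (powerRZ 2 k * x).
Proof.
  intros [m [n ->]]. destruct k as [|q|q]; simpl.
  - exists m, n. ring.
  - exists (m * 2 ^ Z.of_nat (Pos.to_nat q))%Z, n. rewrite mult_IZR, <- pow2_IZR. field. apply pow2_nz.
  - exists m, (n + Pos.to_nat q)%nat. rewrite pow_add. field. split; apply pow2_nz.
Qed.

Lemma finite_max (P : nat -> nat -> Prop) n :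
  (forall i D D', P i D -> (D <= D')%nat -> P i D') ->
  (forall i, (i < n)%nat -> exists D, P i D) ->
  exists D, forall i, (i < n)%nat -> P i D.
Proof.
  intros Hm. induction n as [|n IH]; intros Hex.
  - exists 0%nat. intros; lia.
  - destruct IH as [D1 H1]; [intros; apply Hex; lia|].
    destruct (Hex n ltac:(lia)) as [D2 H2].
    exists (D1 + D2)%nat. intros i Hi.
    destruct (Nat.eq_dec i n) as [->|Hne].
    + apply (Hm n D2); auto; lia.
    + apply (Hm i D1); [apply H1; lia| lia].
Qed.

Lemma wval_int u : exists a : Z, wval u = IZR a / 2 ^ length u /\ 0 <= IZR a /\ IZR a + 1 <= 2 ^ length u.
Proof.
  induction u as [|b u [a [E [A1 A2]]]]; simpl.
  - exists 0%Z. split; [field|]. lra.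
  - exists ((if b then 2 ^ Z.of_nat (length u) else 0) + a)%Z.
    rewrite plus_IZR. destruct b; rewrite ?(pow2_IZR (length u)) in *; rewrite E;
      (split; [field; apply not_0_IZR; apply Z.pow_nonzero; lia|]);
      simpl; lra.
Qed.

Lemma word_of M : forall a : Z, 0 <= IZR a -> IZR a + 1 <= 2 ^ M ->
  exists v, length v = M /\ wval v = IZR a / 2 ^ M.
Proof.
  induction M as [|M IH]; intros a A1 A2.
  - exists []. simpl in *. assert (a = 0%Z).
    { apply le_IZR in A1. assert (IZR a < 1) by lra. apply lt_IZR in H. lia. }
    subst. split; auto. simpl. field.
  - simpl in A2. destruct (Rle_lt_dec (IZR a + 1) (2 ^ M)) as [Hl|Hl].
    + destruct (IH a A1 Hl) as [v [Lv Ev]]. exists (false :: v). simpl.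
      rewrite Lv, Ev. split; auto. field. apply pow2_nz.
    + set (P := (2 ^ Z.of_nat M)%Z) in *.
      assert (EP : 2 ^ M = IZR P) by apply pow2_IZR.
      assert (Hge : (P <= a)%Z).
      { rewrite EP in Hl. assert (IZR P < IZR (a + 1)) by (rewrite plus_IZR; lra).
        apply lt_IZR in H. lia. }
      apply IZR_le in Hge.
      destruct (IH (a - P)%Z) as [v [Lv Ev]]; rewrite ?minus_IZR; [lra|lra|].
      exists (true :: v). simpl. rewrite Lv, Ev, minus_IZR. split; auto.
      rewrite EP. field. rewrite <- EP. apply pow2_nz.
Qed.


Lemma find_piece (p : nat -> R) x : forall m, p 0%nat <= x -> x < p m ->
  exists i, (i < m)%nat /\ p i <= x < p (S i).
Proof.
  induction m as [|m IH]; intros H1 H2; [lra|].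
  destruct (Rlt_le_dec x (p m)) as [Hl|Hl].
  - destruct (IH H1 Hl) as [i [Hi Hp]]. exists i. split; [lia|auto].
  - exists m. split; [lia|lra].
Qed.

Lemma pRZ_diff a b : powerRZ 2 (Z.of_nat a - Z.of_nat b) = 2 ^ a / 2 ^ b.
Proof.
  unfold Z.sub. rewrite powerRZ_add by lra. rewrite powerRZ_neg', <- !pow_powerRZ.
  reflexivity.
Qed.

Lemma gap N y a : dyD N y -> IZR a / 2 ^ N < y -> IZR a / 2 ^ N + / 2 ^ N <= y.
Proof.
  intros [c ->] Hl. pose proof (pow2_pos N).
  assert (IZR a < IZR c).
  { apply (Rmult_lt_reg_r (/ 2 ^ N)); [apply Rinv_0_lt_compat; lra|]. exact Hl. }
  apply lt_IZR in H0. assert (IZR (a + 1) <= IZR c) by (apply IZR_le; lia).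
  rewrite plus_IZR in H1. unfold Rdiv.
  replace (IZR a * / 2 ^ N + / 2 ^ N) with ((IZR a + 1) * / 2 ^ N) by ring.
  apply Rmult_le_compat_r; [left; apply Rinv_0_lt_compat; lra| lra].
Qed.

Lemma inF_Nice f fi : inF f -> inverse_of fi f -> Nice f.
Proof.
  intros HF Hfi. destruct HF as [Hout [f0 [f1 [n [p [p0 [pn [Hinc [Hdy Hpc]]]]]]]]].
  split; auto. split; auto. split; auto. split; [exists fi; auto|].
  assert (Hfp : forall i, (i <= n)%nat -> dyadic (f (p i))).
  { induction i as [|i IHi]; intros Hi.
    - rewrite p0, f0. exists 0%Z, 0%nat. simpl. field.
    - destruct (Hpc i ltac:(lia)) as [k [b Hk]]. pose proof (Hinc i ltac:(lia)).
      replace (f (p (S i))) with (f (p i) + powerRZ 2 k * (p (S i) + - p i)).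
      + apply dy_add; [apply IHi; lia|]. apply dy_pmul, dy_add;
          [apply Hdy; lia| apply dy_opp, Hdy; lia].
      + rewrite !Hk by lra. ring. }
  set (P := fun i D => exists k b, (forall x, p i <= x <= p (S i) -> f x = powerRZ 2 k * x + b)
     /\ (- Z.of_nat D <= k <= Z.of_nat D)%Z /\ dyD D b /\ dyD D (p (S i))).
  destruct (finite_max P n) as [D HD].
  - intros i D D' [k [b [H1 [H2 [H3 H4]]]]] HDD. exists k, b. repeat split; auto; try lia;
      eapply dyD_mono; eauto.
  - intros i Hi. destruct (Hpc i Hi) as [k [b Hk]]. pose proof (Hinc i Hi).
    assert (Eb : b = f (p i) + - (powerRZ 2 k * p i)) by (rewrite Hk by lra; ring).
    assert (Hb : dyadic b).
    { rewrite Eb. apply dy_add; [apply Hfp; lia| apply dy_opp, dy_pmul, Hdy; lia]. }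
    destruct (dyadic_D b Hb) as [D1 H1].
    destruct (dyadic_D (p (S i)) (Hdy (S i) ltac:(lia))) as [D2 H2].
    set (D3 := Z.to_nat (Z.abs k)).
    assert (E3 : Z.of_nat D3 = Z.abs k) by (apply Z2Nat.id; lia).
    exists (D1 + D2 + D3)%nat, k, b. repeat split; auto; try lia.
    + apply (dyD_mono D1); auto; lia.
    + apply (dyD_mono D2); auto; lia.
  - exists (D + D)%nat, (D + D + D)%nat. intros u Lu.
    set (N := (D + D)%nat) in *.
    destruct (wval_int u) as [a [Ea [A1 A2]]]. rewrite Lu in Ea, A2.
    destruct (wval_bounds u) as [W1 W2]. rewrite Lu in W2.
    pose proof (pow2_inv_pos N) as PN.
    destruct (find_piece p (wval u) n) as [i [Hi [Pi1 Pi2]]]; [lra|lra|].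
    destruct (HD i Hi) as [k [b [Hk [Hkb [[c Hc] Hps]]]]].
    assert (Hgap : wval u + / 2 ^ N <= p (S i)).
    { rewrite Ea in *. apply gap; auto. apply (dyD_mono D); auto. unfold N; lia. }
    set (M := Z.to_nat (Z.of_nat N - k)).
    assert (EM : Z.of_nat M = (Z.of_nat N - k)%Z) by (apply Z2Nat.id; unfold N; lia).
    assert (Hpk : powerRZ 2 k = 2 ^ N / 2 ^ M).
    { rewrite <- pRZ_diff. f_equal. lia. }
    assert (HMD : (D <= M)%nat) by (unfold N in EM; lia).
    set (a' := (a + c * 2 ^ Z.of_nat (M - D))%Z).
    assert (Efu : f (wval u) = IZR a' / 2 ^ M).
    { rewrite Hk by lra. rewrite Hpk, Ea, Hc. unfold a'.
      rewrite plus_IZR, mult_IZR, <- pow2_IZR.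
      assert (E2 : 2 ^ M = 2 ^ D * 2 ^ (M - D)) by (rewrite <- pow_add; f_equal; lia).
      rewrite E2. field. repeat split; apply pow2_nz. }
    assert (Efu' : f (wval u + / 2 ^ N) = IZR a' / 2 ^ M + / 2 ^ M).
    { rewrite <- Efu. rewrite !Hk by lra. rewrite Hpk. field. split; apply pow2_nz. }
    pose proof (range01 f fi Hout Hfi (wval u) ltac:(lra)) as R1.
    pose proof (range01 f fi Hout Hfi (wval u + / 2 ^ N) ltac:(lra)) as R2.
    rewrite Efu in R1. rewrite Efu' in R2.
    pose proof (pow2_pos M) as PM.
    assert (Ea' : IZR a' = IZR a' / 2 ^ M * 2 ^ M) by (field; lra).
    destruct (word_of M a') as [v [Lv Ev]].
    + rewrite Ea'. apply Rmult_le_pos; lra.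
    + assert (T : (IZR a' / 2 ^ M + / 2 ^ M) * 2 ^ M <= 1 * 2 ^ M)
        by (apply Rmult_le_compat_r; lra).
      replace ((IZR a' / 2 ^ M + / 2 ^ M) * 2 ^ M) with (IZR a' + 1) in T by (field; lra).
      lra.
    + exists v. split; [unfold N in EM; lia|].
      intros x Hx. rewrite Lu in Hx. rewrite Hk by lra. rewrite Lu, Lv, Ev, <- Efu.
      rewrite (Hk (wval u)) by lra. rewrite Hpk. field; repeat split; apply pow2_nz.
Qed.


Definition Dinv f := Nice f /\ germ0 f 0 /\ germ1 f 0.

Lemma derived_Dinv f : derivedF f -> Dinv f.
Proof.
  induction 1 as [|c Hc|f g _ [N1 [A1 B1]] _ [N2 [A2 B2]]|f g _ [N1 [A1 B1]] Hi].
  - split; [apply Nice_id|]. split; exists 1; split; try lra; intros x _; simpl; ring.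
  - destruct Hc as [f [g [fi [gi [Ff [Fg [Ifi [Igi Ec]]]]]]]].
    assert (Ec' : c = fun x => f (g (fi (gi x)))) by (apply functional_extensionality; auto).
    subst c.
    assert (Nf := inF_Nice f fi Ff Ifi). assert (Ng := inF_Nice g gi Fg Igi).
    assert (Nfi := Nice_inv f fi Nf Ifi). assert (Ngi := Nice_inv g gi Ng Igi).
    destruct (inF_germ0 f Ff) as [k1 G1]. destruct (inF_germ0 g Fg) as [k2 G2].
    destruct (inF_germ1 f Ff) as [j1 J1]. destruct (inF_germ1 g Fg) as [j2 J2].
    split; [apply Nice_comp; auto; apply Nice_comp; auto; apply Nice_comp; auto|]. split.
    + apply (germ0_eq _ (k1 + (k2 + (- k1 + - k2)))); [|lia].
      apply germ0_comp; auto; apply germ0_comp; auto; apply germ0_comp; eapply germ0_inv; eauto.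
    + apply (germ1_eq _ (j1 + (j2 + (- j1 + - j2)))); [|lia].
      apply germ1_comp; auto; apply germ1_comp; auto; apply germ1_comp; eapply germ1_inv; eauto.
  - split; [apply Nice_comp; auto|]. split.
    + apply (germ0_eq _ (0 + 0)); [apply germ0_comp; auto| lia].
    + apply (germ1_eq _ (0 + 0)); [apply germ1_comp; auto| lia].
  - split; [eapply Nice_inv; eauto|]. split.
    + apply (germ0_eq _ (- 0)); [eapply germ0_inv; eauto| lia].
    + apply (germ1_eq _ (- 0)); [eapply germ1_inv; eauto| lia].
Qed.


Lemma INR_le_pow n : INR n <= 2 ^ n.
Proof.
  induction n as [|n IH]; [simpl; lra|]. rewrite S_INR. simpl pow.
  assert (1 <= 2 ^ n) by (apply pow_R1_Rle; lra). lra.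
Qed.

Lemma small e N0 : 0 < e -> exists N, (N0 <= N)%nat /\ / 2 ^ N <= e.
Proof.
  intros He. destruct (archimed (/ e)) as [Hz _].
  set (z := up (/ e)) in *.
  assert (Ie : 0 < / e) by (apply Rinv_0_lt_compat; lra).
  assert (Z0 : (0 <= z)%Z) by (apply le_IZR; lra).
  exists (N0 + Z.to_nat z)%nat. split; [lia|].
  assert (E : INR (Z.to_nat z) = IZR z) by (rewrite INR_IZR_INZ, Z2Nat.id; auto).
  pose proof (INR_le_pow (N0 + Z.to_nat z)). rewrite plus_INR in H.
  pose proof (pos_INR N0).
  assert (/ e <= 2 ^ (N0 + Z.to_nat z)) by lra.
  rewrite <- (Rinv_inv e). apply Rinv_le_contravar; auto.
Qed.

Lemma no_true u : ~ In true u -> wval u = 0.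
Proof.
  induction u as [|b u IH]; simpl; intros Hn; auto.
  destruct b; [exfalso; auto|]. rewrite IH; [field| auto].
Qed.

Lemma no_false u : ~ In false u -> wval u + / 2 ^ length u = 1.
Proof.
  induction u as [|b u IH]; simpl; intros Hn; [field|].
  destruct b; [|exfalso; auto]. rewrite Rinv_mult.
  assert (wval u + / 2 ^ length u = 1) by auto. lra.
Qed.

Lemma in_true u : In true u -> 0 < wval u.
Proof.
  induction u as [|b u IH]; simpl; intros Hn; [destruct Hn|].
  destruct (wval_bounds u). destruct b; [lra|].
  destruct Hn as [Hn|Hn]; [discriminate|]. specialize (IH Hn). lra.
Qed.

Lemma in_false u : In false u -> wval u + / 2 ^ length u < 1.
Proof.
  induction u as [|b u IH]; simpl; intros Hn; [destruct Hn|].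
  destruct (wval_bounds u). rewrite Rinv_mult. pose proof (pow2_inv_pos (length u)).
  destruct b; [|lra].
  destruct Hn as [Hn|Hn]; [discriminate|]. specialize (IH Hn). lra.
Qed.

Lemma piece_word N i : (i < 2 ^ N)%nat -> exists u, length u = N /\ wval u = INR i / 2 ^ N.
Proof.
  intros Hi. destruct (word_of N (Z.of_nat i)) as [u [Lu Eu]].
  - rewrite <- INR_IZR_INZ. apply pos_INR.
  - rewrite <- INR_IZR_INZ. rewrite <- S_INR.
    replace (2 ^ N) with (INR (2 ^ N)) by (rewrite pow_INR; simpl; f_equal; lra).
    apply le_INR. lia.
  - exists u. split; auto. rewrite Eu, INR_IZR_INZ. reflexivity.
Qed.

Lemma Dinv_inCl (H : (R -> R) -> Prop) :
  subgroupF H ->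
  (forall u, In true u -> In false u -> simH H u [false; true]) ->
  forall f, Dinv f -> inCl H f.
Proof.
  intros HG Hkey f [[Out [f0 [f1 [[fi Hfi] [N0 [K B]]]]]] [[e0 [E0 G0]] [e1 [E1 G1]]]].
  destruct (small (Rmin e0 e1) N0) as [N [HN Hs]]; [apply Rmin_glb_lt; auto|].
  assert (He0 := Rmin_l e0 e1). assert (He1 := Rmin_r e0 e1).
  assert (B' : forall u, length u = N -> exists v, branch f u v).
  { intros u Lu. destruct (split_word u N0) as [u1 [w [-> [L1 Lw]]]]; [lia|].
    destruct (B u1 L1) as [v [_ Bv]]. exists (v ++ w). apply branch_ext; auto. }
  assert (PN := pow2_pos N). assert (IPN := pow2_inv_pos N).
  set (p := fun i : nat => INR i / 2 ^ N).
  assert (pS : forall i, p (S i) = p i + / 2 ^ N).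
  { intros i. unfold p. rewrite S_INR. field. lra. }
  assert (p0 : p 0%nat = 0) by (unfold p; simpl; field; lra).
  assert (pn : p (2 ^ N)%nat = 1).
  { unfold p. rewrite pow_INR. replace (INR 2) with 2 by (simpl; lra). field. lra. }
  assert (Hinc : forall i, (i < 2 ^ N)%nat -> p i < p (S i)).
  { intros i _. rewrite pS. lra. }
  assert (Hf01 : f (wval [] ) = 0) by (simpl; auto).
  split.
  - split; [exact Out|]. split; [exact f0|]. split; [exact f1|].
    exists (2 ^ N)%nat, p. split; [exact p0|]. split; [exact pn|]. split; [exact Hinc|].
    split.
    + intros i _. exists (Z.of_nat i), N. unfold p. rewrite INR_IZR_INZ. reflexivity.
    + intros i Hi. destruct (piece_word N i Hi) as [u [Lu Eu]].
      destruct (B' u Lu) as [v Bv].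
      exists (Z.of_nat N - Z.of_nat (length v))%Z,
        (wval v - wval u * 2 ^ N / 2 ^ length v).
      intros x Hx. rewrite pS in Hx. fold (p i) in Eu. rewrite Bv.
      * rewrite pRZ_diff, Lu. field; repeat split; apply pow2_nz.
      * rewrite Lu. lra.
  - exists (2 ^ N)%nat, p. split; [exact p0|]. split; [exact pn|]. split; [exact Hinc|].
    intros i Hi. destruct (piece_word N i Hi) as [u [Lu Eu]].
    fold (p i) in Eu.
    destruct (in_dec Bool.bool_dec true u) as [Ht|Ht].
    + destruct (in_dec Bool.bool_dec false u) as [Hf|Hf].
      * destruct (B' u Lu) as [v Bv].
        assert (Hv1 : In true v).
        { destruct (in_dec Bool.bool_dec true v) as [?|Hn]; auto. exfalso.
          apply no_true in Hn. pose proof (Bv (wval u)) as E.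
          rewrite Lu in E. specialize (E ltac:(lra)).
          rewrite Hn in E. replace (0 + (wval u - wval u) * 2 ^ N / 2 ^ length v) with 0 in E
            by (field; apply pow2_nz).
          pose proof (in_true u Ht).
          destruct (Hfi (wval u)) as [X _]. rewrite E in X.
          destruct (Hfi 0) as [Y _]. rewrite f0 in Y. lra. }
        assert (Hv2 : In false v).
        { destruct (in_dec Bool.bool_dec false v) as [?|Hn]; auto. exfalso.
          apply no_false in Hn. pose proof (Bv (wval u + / 2 ^ N)) as E.
          rewrite Lu in E. specialize (E ltac:(lra)).
          replace (wval v + (wval u + / 2 ^ N - wval u) * 2 ^ N / 2 ^ length v) with 1 in E
            by (rewrite <- Hn; field; split; apply pow2_nz).
          pose proof (in_false u Hf). rewrite Lu in H0.
          destruct (Hfi (wval u + / 2 ^ N)) as [X _]. rewrite E in X.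
          destruct (Hfi 1) as [Y _]. rewrite f1 in Y. lra. }
        assert (S1 : simH H u v).
        { eapply simH_trans; [exact HG| apply Hkey; auto|]. apply simH_sym; auto. }
        destruct S1 as [h [Hh Bh]]. exists h. split; auto.
        intros x Hx. rewrite pS in Hx. rewrite Bv, Bh; auto; rewrite Lu; lra.
      * exists (fun x => x). split; [apply HG|].
        intros x Hx. rewrite pS in Hx. apply no_false in Hf. rewrite Lu in Hf.
        rewrite G1 by lra. simpl. ring.
    + exists (fun x => x). split; [apply HG|].
      intros x Hx. rewrite pS in Hx. apply no_true in Ht.
      rewrite G0 by lra. simpl. ring.
Qed.


Theorem lemma2p4 (H : (R -> R) -> Prop) :
  subgroupF H ->
  (forall r : nat, (1 <= r)%nat -> simH H (repeat true r ++ [false]) [true; false]) ->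
  (forall s : nat, (1 <= s)%nat -> simH H (repeat false s ++ [true]) [false; true]) ->
  simH H [false; true] [true; false] ->
  simH H [true; false] [false; true; false] ->
  simH H [false; true; false] [false; true; true] ->
  forall f : R -> R, derivedF f -> inCl H f.
Proof.
  intros HG H1 H2 H3 H4 H5 f Hf.
  apply (Dinv_inCl H HG (key H HG H1 H2 H3 H4 H5)).
  apply derived_Dinv; exact Hf.
Qed.
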